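(* Let $\Gamma$ be a connected $\mathbb Z$-leg-weighted graph with edge set $E$, and let $F_\Gamma$ be the set of all faces of the cones $c_w$ as $w$ runs over $W(\Gamma)$. Then $F_\Gamma$ is a finite fan in $\mathbb Q_{\ge0}^E$.
   Context: A graph consists of finite sets $V$ (vertices) and $H$ (half-edges), a map $\mathrm{end}\colon H\to V$, an involution $i$ of $H$, a genus $g\colon V\to\mathbb Z_{\ge0}$ and an integer twist $k$. Legs are fixed points of $i$; edges are pairs $\{h,i(h)\}$ with $h\ne i(h)$; a directed edge is a non-leg half-edge $h$ from $\mathrm{end}(h)$ to $\mathrm{end}(i(h))$. $\mathrm{val}(v)$ counts non-leg half-edges at $v$, $\kappa(v)=2g(v)-2+\mathrm{val}(v)$, $g(\Gamma)=b_1(\Gamma)+\sum_v g(v)$. A cycle is a closed walk of directed edges repeating no vertex or undirected edge. A weighting is $w\colon H\to\mathbb Z$ with $w(h)+w(i(h))=0$ for $h\ne i(h)$ and $\sum_{\mathrm{end}(h)=v}w(h)+k\kappa(v)=0$ for all $v$; $W(\Gamma)$ is the set of weightings with prescribed integer leg values (summing to $-k(2g(\Gamma)-2)$). For a directed edge $e$ of a cycle $\gamma$, $w_\gamma(e)$ is the value of $w$ at the source half-edge of $e$. $c_w\subseteq\mathbb Q_{\ge0}^E$ is the cone of $t$ with $\sum_{e\in\gamma}w_\gamma(e)t(e)=0$ for all cycles $\gamma$. *)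

(* Defs.v *)
From HB Require Import structures.
From mathcomp Require Import all_boot all_order all_algebra.
From mathcomp Require Import boolp classical_sets cardinality.
Set Implicit Arguments. Unset Strict Implicit. Unset Printing Implicit Defensive.
Import Order.TTheory GRing.Theory Num.Theory.
Local Open Scope ring_scope.
Local Open Scope classical_set_scope.

Section Graph.
(* A graph: vertices V, half-edges H, end map [endp], involution [i]
   (assumed involutive where needed), genus [g], twist [k]. *)
Variables (V H : finType) (endp : H -> V) (i : H -> H) (g : V -> nat) (k : int).

Definition is_leg (h : H) : bool := i h == h.

Definition is_edge_set (A : {set H}) : bool :=
  [exists h, (i h != h) && (A == (finset.set1 h :|: finset.set1 (i h)))].
Definition Edge : Type := {A : {set H} | is_edge_set A}.
HB.instance Definition _ := Finite.on Edge.

(* the coordinate of t : Q^E at the undirected edge underlying h (0 for legs) *)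
Definition tval (t : Edge -> rat) (h : H) : rat :=
  if @insub _ is_edge_set Edge (finset.set1 h :|: finset.set1 (i h)) is Some e then t e else 0.

Definition val_v (v : V) : nat := #|[pred h | (endp h == v) && ~~ is_leg h]|.
Definition kappa (v : V) : int := (2 * (g v)%:Z - 2 + (val_v v)%:Z).

Definition adj : rel V :=
  fun u v => [exists h, [&& ~~ is_leg h, endp h == u & endp (i h) == v]].
Definition graph_connected : Prop := forall u v, connect adj u v.

Definition n_components : nat := n_comp adj predT.
Definition b1 : int := (#|{: Edge}|%:Z - #|V|%:Z + (n_components)%:Z).
Definition genus_total : int := b1 + (\sum_(v : V) g v)%:Z.

Definition is_weighting (w : H -> int) : Prop :=
  (forall h, ~~ is_leg h -> w h + w (i h) = 0) /\
  (forall v, \sum_(h | endp h == v) w h + k * kappa v = 0).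

Definition W_Gamma (legw : H -> int) : set (H -> int) :=
  [set w | is_weighting w /\ forall h, is_leg h -> w h = legw h].

Definition is_cycle (s : seq H) : bool :=
  [&& size s != 0%N, all (fun h => ~~ is_leg h) s,
      cycle (fun h h' => endp (i h) == endp h') s,
      uniq (map endp s) & uniq (map (fun h => (finset.set1 h :|: finset.set1 (i h))) s)].

Definition cone_w (w : H -> int) : set (Edge -> rat) :=
  [set t | (forall e, 0 <= t e) /\
     forall s, is_cycle s -> \sum_(h <- s) (w h)%:~R * tval t h = 0].

End Graph.
Arguments cone_w [V H] endp i w _.
Arguments tval [H] i t h.

Section Fans.
Variable E : finType.

Definition lin (a t : E -> rat) : rat := \sum_(e : E) a e * t e.

Definition polyhedral_cone (C : set (E -> rat)) : Prop :=
  exists (n : nat) (A : 'I_n -> E -> rat),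
    C = [set t | forall j, 0 <= lin (A j) t].

Definition face (F C : set (E -> rat)) : Prop :=
  exists a : E -> rat, (forall t, C t -> 0 <= lin a t) /\
    F = [set t | C t /\ lin a t = 0].

Definition fan (S : set (set (E -> rat))) : Prop :=
  [/\ forall C, S C -> polyhedral_cone C,
      forall C, S C -> forall t, C t -> forall e, 0 <= t e,
      forall C F, S C -> face F C -> S F &
      forall C D, S C -> S D -> face (C `&` D) C /\ face (C `&` D) D].

Definition finite_fan (S : set (set (E -> rat))) : Prop :=
  finite_set S /\ fan S.
End Fans.

Definition F_Gamma {V H : finType} (endp : H -> V) (i : H -> H) (g : V -> nat)
  (k : int) (legw : H -> int) : set (set (Edge i -> rat)) :=
  [set F | exists w, W_Gamma endp i g k legw w /\ face F (cone_w endp i w)].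
Arguments F_Gamma {V H} endp i g k legw _.

(* Main.v *)
Require Import Defs.
From HB Require Import structures.
From mathcomp Require Import all_boot all_order all_algebra.
From mathcomp Require Import boolp classical_sets cardinality.
From mathcomp Require Import ring lra zify.
Require Import Defs.
Set Implicit Arguments. Unset Strict Implicit. Unset Printing Implicit Defensive.
Import Order.TTheory GRing.Theory Num.Theory.
Local Open Scope ring_scope.
Local Open Scope classical_set_scope.

Section FanGen.
Variable E : finType.
Local Notation vec := (E -> rat).

Lemma lin_linr (a u t : vec) c d :
  lin a (fun e => c * u e + d * t e) = c * lin a u + d * lin a t.
Proof.
rewrite /lin !mulr_sumr -big_split; apply: eq_bigr => e _ /=.
by rewrite mulrDr; congr (_ + _); rewrite mulrCA.
Qed.

Lemma lin_addl (a b t : vec) : lin (fun e => a e + b e) t = lin a t + lin b t.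
Proof. by rewrite /lin -big_split; apply: eq_bigr => e _; rewrite mulrDl. Qed.

Lemma lin_scalel (a t : vec) c : lin (fun e => c * a e) t = c * lin a t.
Proof. by rewrite /lin mulr_sumr; apply: eq_bigr => e _; rewrite mulrA. Qed.

Lemma lin0r (a : vec) : lin a (fun _ => 0) = 0.
Proof. by rewrite /lin big1 // => e _; rewrite mulr0. Qed.

Lemma lin_ge0 (a t : vec) : (forall e, 0 <= a e) -> (forall e, 0 <= t e) ->
  0 <= lin a t.
Proof. by move=> ha ht; apply: sumr_ge0 => e _; apply: mulr_ge0. Qed.

Lemma lin_eq0 (a t : vec) : (forall e, 0 <= a e) -> (forall e, 0 <= t e) ->
  (lin a t = 0 <-> forall e, a e != 0 -> t e = 0).
Proof.
move=> ha ht; split.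
- move=> /eqP; rewrite /lin psumr_eq0; last by move=> e _; apply: mulr_ge0.
  move=> /allP H e nz; have := H e (mem_index_enum e).
  by rewrite mulf_eq0 (negbTE nz) /= => /eqP.
- move=> H; rewrite /lin big1 // => e _.
  by case: (eqVneq (a e) 0) => [->|/H ->]; rewrite ?mul0r ?mulr0.
Qed.

Lemma face_orth (L : vec -> Prop) : L (fun _ => 0) ->
  (forall u t c d, L u -> L t -> L (fun e => c * u e + d * t e)) ->
  forall F, face F [set t | (forall e, 0 <= t e) /\ L t] ->
  exists b : vec, (forall e, 0 <= b e) /\
    F = [set t | ((forall e, 0 <= t e) /\ L t) /\ lin b t = 0].
Proof.
move=> L0 Llin F [a [aP ->]].
set P := [set t | (forall e, 0 <= t e) /\ L t].
pose Q (t : vec) := P t /\ lin a t = 0.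
have Q0 : Q (fun _ => 0) by split; [split=> //|exact: lin0r].
have QD u t : Q u -> Q t -> Q (fun e => u e + t e).
  move=> [[u0 Lu] au] [[t0 Lt] at_].
  have -> : (fun e => u e + t e) = (fun e => 1 * u e + 1 * t e).
    by apply: funext => e; rewrite !mul1r.
  split; [split|].
  - by move=> e; rewrite !mul1r addr_ge0.
  - exact: Llin.
  - by rewrite lin_linr au at_ !mulr0 addr0.
pose S e := forall t, Q t -> t e = 0.
have ex e : ~ S e -> {t | Q t /\ t e != 0}.
  move=> nS; apply: cid; apply: contrapT => H; apply: nS => t Qt.
  apply: contrapT => /eqP nz; apply: H; by exists t.
pose te e : vec := match pselect (S e) with
  | left _ => (fun _ => 0) | right nS => sval (ex e nS) end.
have teQ e : Q (te e).
  by rewrite /te; case: pselect => // nS; case: (ex e nS) => t [].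
have tepos e : ~ S e -> 0 < te e e.
  rewrite /te; case: pselect => // nS _; case: (ex e nS) => t [[[t0 _] _] nz] /=.
  by rewrite lt_def nz t0.
pose u : vec := fun x => \sum_(e : E) te e x.
have uQ : Q u.
  rewrite /u; elim: (index_enum E) => [|e r IH].
    by have -> : (fun x => \sum_(e <- [::]) te e x) = (fun _ => 0)
      by apply: funext => x; rewrite big_nil.
  have -> : (fun x => \sum_(e0 <- e :: r) te e0 x) =
            (fun x => te e x + \sum_(e0 <- r) te e0 x).
    by apply: funext => x; rewrite big_cons.
  exact: QD.
have upos e : ~ S e -> 0 < u e.
  move=> nS; rewrite /u (bigD1 e) //=; apply: ltr_wpDr; last exact: tepos.
  by apply: sumr_ge0 => e' _; case: (teQ e') => [[+ _] _]; apply.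
pose b : vec := fun e => (`[< S e >])%:R.
have b0 e : 0 <= b e by rewrite /b ler0n.
exists b; split => //.
apply/seteqP; split => t /=.
- move=> Qt; split; first by case: Qt.
  apply/(lin_eq0 b0 (proj1 (proj1 Qt))).
  by move=> e; rewrite /b; case: asboolP => // Se _; apply: Se.
- move=> [Pt lbt]; split => //.
  have tS e : S e -> t e = 0.
    move=> Se; apply: (proj1 (lin_eq0 b0 (proj1 Pt)) lbt).
    by rewrite /b; case: asboolP.
  have t0 := proj1 Pt.
  pose c := \sum_(e : E) t e / u e.
  have c0 : 0 <= c.
    apply: sumr_ge0 => e _; apply: divr_ge0 => //.
    by case: uQ => [[+ _] _]; apply.
  pose s : vec := fun e => c * u e + (-1) * t e.
  have Ps : P s.
    split; last by apply: Llin; [case: uQ => [[]]|case: Pt].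
    move=> e; rewrite /s mulN1r subr_ge0.
    case: (pselect (S e)) => [Se|nS].
      by rewrite (tS e Se) (Se u uQ) mulr0.
    have : t e / u e <= c.
      rewrite /c (bigD1 e) //= ler_wpDr //; apply: sumr_ge0 => e' _.
      by apply: divr_ge0 => //; case: uQ => [[+ _] _]; apply.
    by rewrite ler_pdivrMr ?upos.
  have H := aP s Ps.
  have E1 : lin a s = - lin a t.
    by rewrite /s lin_linr (proj2 uQ) mulr0 add0r mulN1r.
  rewrite E1 oppr_ge0 in H.
  by apply/le_anti; rewrite H; apply: aP.
Qed.

Lemma poly_of_fin (T : finType) (Fn : T -> vec) C :
  C = [set t | forall x, 0 <= lin (Fn x) t] -> polyhedral_cone C.
Proof.
move=> ->; exists #|T|, (fun j => Fn (enum_val j)).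
apply/seteqP; split => t /= H.
- by move=> j; apply: H.
- by move=> x; rewrite -(enum_rankK x); apply: H.
Qed.
End FanGen.

Section Graph.
Variables (V H : finType) (endp : H -> V) (i : H -> H).
Hypothesis hi : involutive i.

Local Notation leg := (is_leg i).
Local Notation tv := (tval i).
Definition eset (h : H) : {set H} := finset.set1 h :|: finset.set1 (i h).

Lemma leg_i h : leg (i h) = leg h.
Proof. by rewrite /is_leg hi eq_sym. Qed.

Lemma tval_i (t : Edge i -> rat) h : tv t (i h) = tv t h.
Proof. by rewrite /tval hi finset.setUC. Qed.

Lemma tval_ge0 (t : Edge i -> rat) h : (forall e, 0 <= t e) -> 0 <= tv t h.
Proof. by move=> t0; rewrite /tval; case: (insub _). Qed.

Lemma tval_lin (u t : Edge i -> rat) c d h :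
  tv (fun e => c * u e + d * t e) h = c * tv u h + d * tv t h.
Proof. by rewrite /tval; case: (insub _) => // ; rewrite !mulr0 addr0. Qed.

Lemma tval0 h : tv (fun _ => 0) h = 0.
Proof. by rewrite /tval; case: (insub _). Qed.

Lemma tval_leg (t : Edge i -> rat) h : leg h -> tv t h = 0.
Proof.
move=> lh; rewrite /tval; case: insubP => // e He _.
move: He; rewrite /is_leg in lh; rewrite (eqP lh) finset.setUid.
move/existsP => [h' /andP [nl /eqP E]].
have : h' \in finset.set1 h by rewrite E !inE eqxx.
have : i h' \in finset.set1 h by rewrite E !inE eqxx orbT.
rewrite !inE => /eqP ih /eqP hh.
by rewrite ih hh eqxx in nl.
Qed.

Definition ind (h : H) : Edge i -> rat :=
  fun e => if @insub _ (is_edge_set i) (Edge i) (eset h) is Some e0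
           then (e0 == e)%:R else 0.

Lemma ind_ge0 h e : 0 <= ind h e.
Proof. by rewrite /ind; case: (insub _) => // e0; rewrite ler0n. Qed.

Lemma lin_ind h t : lin (ind h) t = tv t h.
Proof.
rewrite /lin /ind /tval -/(eset h); case: (insub _) => [e0|].
- rewrite (bigD1 e0) //= eqxx mul1r big1 ?addr0 // => e ne.
  by rewrite eq_sym (negbTE ne) mul0r.
- by rewrite big1 // => e _; rewrite mul0r.
Qed.

Fixpoint walk (u : V) (s : seq H) (v : V) : Prop :=
  match s with
  | [::] => u = v
  | h :: s' => ~~ leg h /\ endp h = u /\ walk (endp (i h)) s' v
  end.

Lemma walk_cat u a b v :
  walk u (a ++ b) v <-> exists x, walk u a x /\ walk x b v.
Proof.
elim: a u => [|h a IH] u /=.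
- by split; [move=> W; exists u | move=> [x [-> W]]].
- split.
  + move=> [nl [eh /IH [x [W1 W2]]]]; by exists x.
  + move=> [x [[nl [eh W1]] W2]]; split => //; split => //; apply/IH; by exists x.
Qed.

Lemma walk_rev u s v : walk u s v -> walk v (rev (map i s)) u.
Proof.
elim: s u => [|h s IH] u /=; first by move=> ->.
move=> [nl [eh W]]; rewrite rev_cons -cats1.
apply/walk_cat; exists (endp (i h)); split; first exact: IH.
by rewrite /= leg_i hi.
Qed.

Lemma walk_all u s v : walk u s v -> all (fun h => ~~ leg h) s.
Proof. by elim: s u => [|h s IH] u //= [-> [_ /IH ->]]. Qed.

Lemma walk_path h p v h0 : walk (endp (i h)) p v -> endp h0 = v ->
  path (fun h h' => endp (i h) == endp h') h (rcons p h0).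
Proof.
elim: p h => [|h' p IH] h /=; first by move=> -> ->; rewrite eqxx.
by move=> [_ [-> W]] e0; rewrite eqxx /=; apply: IH.
Qed.

Lemma walk_cycle u s : walk u s u -> s != [::] ->
  cycle (fun h h' => endp (i h) == endp h') s.
Proof. by case: s => [|h p] //= [_ [eh W]] _; apply: walk_path W eh. Qed.

Lemma split_nuniq (T : eqType) (F : H -> T) s : ~~ uniq (map F s) ->
  exists a x b y c, s = a ++ x :: b ++ y :: c /\ F x = F y.
Proof.
elim: s => [|z s IH] //=; rewrite negb_and negbK; case/orP.
- move/mapP => [y ys Fy]; case/splitPr: ys => b c.
  by exists [::], z, b, y, c.
- move/IH => [a [x [b [y [c [-> Fxy]]]]]].
  by exists (z :: a), x, b, y, c.
Qed.

Section Sums.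
Variable f : H -> rat.
Hypothesis fanti : forall h, f (i h) = - f h.
Hypothesis fcyc : forall s, is_cycle endp i s -> \sum_(h <- s) f h = 0.

Lemma sumcat a b : \sum_(h <- a ++ b) f h = \sum_(h <- a) f h + \sum_(h <- b) f h.
Proof. by rewrite big_cat. Qed.
Lemma sumcons x b : \sum_(h <- x :: b) f h = f x + \sum_(h <- b) f h.
Proof. by rewrite big_cons. Qed.

Lemma sum_rev s : \sum_(h <- rev (map i s)) f h = - \sum_(h <- s) f h.
Proof. by rewrite big_rev big_map -sumrN; apply: eq_bigr => h _; rewrite fanti. Qed.

Lemma closed_sum0 n s u : (size s <= n)%N -> walk u s u -> \sum_(h <- s) f h = 0.
Proof.
elim: n s u => [|n IH] s u.
  by rewrite leqn0 => /nilP -> _; rewrite big_nil.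
move=> sz W.
have caseA : forall a x b y c, s = a ++ x :: b ++ y :: c -> endp x = endp y ->
    \sum_(h <- s) f h = 0.
  move=> a x b y c sE exy; rewrite sE in W sz.
  move/walk_cat: W => [p [Wa /= [nlx [exp W']]]].
  move/walk_cat: W' => [q [Wb /= [nly [eyq Wc]]]].
  have S1 : \sum_(h <- x :: b) f h = 0.
    apply: (IH _ p); last by split => //; split => //; rewrite -exp exy eyq.
    by move: sz; rewrite size_cat /= size_cat /= -!addnS; lia.
  have S2 : \sum_(h <- a ++ y :: c) f h = 0.
    apply: (IH _ u); last by apply/walk_cat; exists p; split=> //=; split => //; split => //; rewrite -exy exp.
    by move: sz; rewrite !size_cat /= !size_cat /=; lia.
  rewrite sumcons in S1; rewrite sumcat sumcons in S2.
  rewrite sE sumcat sumcons sumcat sumcons; lra.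
case: (boolP (uniq (map endp s))) => [ue|/split_nuniq [a [x [b [y [c [sE exy]]]]]]];
  last exact: caseA sE exy.
case: (boolP (uniq (map eset s))) => [ues|/split_nuniq [a [x [b [y [c [sE exy]]]]]]].
  case: (eqVneq s [::]) => [->|sn]; first by rewrite big_nil.
  apply: fcyc; apply/and5P; split => //.
  - by rewrite size_eq0.
  - exact: walk_all W.
  - exact: walk_cycle W sn.
have : y \in eset x by rewrite exy !inE eqxx.
rewrite !inE => /orP [/eqP yx | /eqP yix].
  by apply: (caseA _ _ _ _ _ sE); rewrite yx.
rewrite sE in W sz.
move/walk_cat: W => [p [Wa /= [nlx [exp W']]]].
move/walk_cat: W' => [q [Wb /= [nly [eyq Wc]]]].
have S1 : \sum_(h <- b) f h = 0.
  have e1 : endp (i x) = q by rewrite -yix.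
  apply: (IH _ (endp (i x))); last by rewrite {2}e1.
  by move: sz; rewrite size_cat /= size_cat /=; lia.
have S2 : \sum_(h <- a ++ c) f h = 0.
  apply: (IH _ u); last by apply/walk_cat; exists p; split=> //; rewrite yix hi exp in Wc.
  by move: sz; rewrite !size_cat /= !size_cat /=; lia.
rewrite sumcat in S2.
by rewrite sE sumcat sumcons sumcat sumcons yix fanti S1 add0r addNKr.
Qed.
Hypothesis conn : graph_connected endp i.

Lemma walk_ex u v : exists s, walk u s v.
Proof.
have := conn u v; move/connectP => [p pth ->].
elim: p u pth => [|z p IH] u /=; first by exists [::].
move=> /andP [/existsP [h /and3P [nl /eqP eh /eqP eih]] pth].
have [s W] := IH z pth.
by exists (h :: s) => /=; rewrite eih.
Qed.

Lemma potential : exists phi : V -> rat,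
  forall h, ~~ leg h -> f h = phi (endp (i h)) - phi (endp h).
Proof.
case: (pickP (@predT V)) => [r _|V0]; last first.
  by exists (fun _ => 0) => h; have := V0 (endp h).
pose phi v := \sum_(h <- sval (cid (walk_ex r v))) f h.
exists phi => h nl; rewrite /phi.
case: (cid (walk_ex r (endp (i h)))) => q Wq.
case: (cid (walk_ex r (endp h))) => p Wp /=.
have W : walk r (p ++ h :: rev (map i q)) r.
  apply/walk_cat; exists (endp h); split => //=; split => //; split => //.
  exact: walk_rev.
have := closed_sum0 (leqnn _) W.
rewrite sumcat sumcons sum_rev; lra.
Qed.
End Sums.

Variables (g : V -> nat) (k : int) (legw : H -> int).
Hypothesis conn : graph_connected endp i.

Definition Lw (w : H -> int) (t : Edge i -> rat) : Prop :=
  forall s, is_cycle endp i s -> \sum_(h <- s) (w h)%:~R * tv t h = 0.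

Lemma coneE w : cone_w endp i w = [set t | (forall e, 0 <= t e) /\ Lw w t].
Proof. by []. Qed.

Local Notation Wg := (W_Gamma endp i g k legw).

Lemma w_anti w : Wg w -> forall h, ~~ leg h -> w (i h) = - w h.
Proof. by move=> [[a _] _] h nl; apply/eqP; rewrite -addr_eq0 addrC a. Qed.

Lemma fz_anti (z : H -> int) (t : Edge i -> rat) :
  (forall h, ~~ leg h -> z (i h) = - z h) ->
  forall h, (z (i h))%:~R * tv t (i h) = - ((z h)%:~R * tv t h).
Proof.
move=> za h; case: (boolP (leg h)) => [lh|nl].
  by rewrite (eqP lh) tval_leg // !mulr0 oppr0.
by rewrite za // tval_i rmorphN mulNr.
Qed.

Lemma key w w' t : Wg w -> Wg w' -> cone_w endp i w t -> cone_w endp i w' t ->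
  forall h, ((w h - w' h)%:~R : rat) * tv t h = 0.
Proof.
move=> Ww Ww' [t0 Ct] [_ Ct'].
pose d h := w h - w' h.
have dleg h : leg h -> d h = 0.
  by move=> lh; rewrite /d Ww.2 // Ww'.2 // subrr.
have danti h : d (i h) = - d h.
  case: (boolP (leg h)) => [lh|nl]; first by rewrite (eqP lh) dleg // oppr0.
  by rewrite /d !w_anti //; ring.
pose f h := (d h)%:~R * tv t h.
have fanti h : f (i h) = - f h by apply: fz_anti => h' _.
have fcyc s : is_cycle endp i s -> \sum_(h <- s) f h = 0.
  move=> cs; rewrite /f /d.
  under eq_bigr do rewrite rmorphB mulrBl.
  by rewrite sumrB Ct // Ct' // subrr.
have [phi Hphi] := potential fanti fcyc conn.
have S : \sum_h (d h)%:~R * f h = 0.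
  have -> : \sum_h (d h)%:~R * f h =
            \sum_h (d h)%:~R * phi (endp (i h)) - \sum_h (d h)%:~R * phi (endp h).
    rewrite -sumrB; apply: eq_bigr => h _; rewrite -mulrBr.
    case: (boolP (leg h)) => [lh|nl]; first by rewrite dleg // !mul0r.
    by rewrite -Hphi.
  rewrite (reindex_inj (inv_inj hi)) /=.
  under eq_bigr do rewrite hi danti rmorphN mulNr.
  rewrite sumrN.
  have -> : \sum_h (d h)%:~R * phi (endp h) = 0.
    rewrite (partition_big endp predT) //=; apply: big1 => v _.
    rewrite (eq_bigl (fun h => endp h == v)) //.
    rewrite (eq_bigr (fun h => (d h)%:~R * phi v)); last by move=> h /eqP ->.
    rewrite -mulr_suml -rmorph_sum /d sumrB.
    have -> : \sum_(h | endp h == v) w h = - (k * kappa endp i g v).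
      by apply/eqP; rewrite -addr_eq0 Ww.1.2.
    have -> : \sum_(h | endp h == v) w' h = - (k * kappa endp i g v).
      by apply/eqP; rewrite -addr_eq0 Ww'.1.2.
    by rewrite subrr mul0r.
  by rewrite oppr0 subr0.
have P0 : forall h, true -> 0 <= (d h)%:~R * f h.
  by move=> h _; rewrite /f mulrA -expr2 mulr_ge0 ?sqr_ge0 ?tval_ge0.
move=> h; change ((d h)%:~R * tv t h = 0).
have : (d h)%:~R * f h = 0 by apply: (psumr_eq0P P0 S).
rewrite /f mulrA -expr2 => /eqP; rewrite mulf_eq0 expf_eq0 /=.
by case/orP => /eqP ->; rewrite ?mul0r ?mulr0.
Qed.

Definition Bnd : int := \sum_(v : V)
  `|k * kappa endp i g v + \sum_(h | (endp h == v) && leg h) legw h|.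

Lemma Bnd_ge0 : 0 <= Bnd.
Proof. by apply: sumr_ge0 => v _; apply: normr_ge0. Qed.

Lemma bound_pos w t h : Wg w -> cone_w endp i w t -> 0 <= w h -> 0 < tv t h ->
  w h <= Bnd.
Proof.
move=> Ww [t0 Ct] wh0 tpos.
have nl : ~~ leg h.
  by apply/negP => lh; rewrite tval_leg // ltxx in tpos.
pose f h := (w h)%:~R * tv t h.
have fanti h' : f (i h') = - f h' by apply: fz_anti; apply: w_anti.
have [phi Hphi] := potential fanti Ct conn.
case: (eqVneq (w h) 0) => [->|wnz]; first exact: Bnd_ge0.
have whp : 0 < w h by rewrite lt_def wnz wh0.
pose U := [pred x | phi x <= phi (endp h)].
pose div v := \sum_(h' | (endp h' == v) && ~~ leg h') w h'.
have divE v : div v = - (k * kappa endp i g v +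
                         \sum_(h' | (endp h' == v) && leg h') legw h').
  have a : \sum_(h' | (endp h' == v) && leg h') legw h' + div v
            + k * kappa endp i g v = 0.
    rewrite -[RHS](Ww.1.2 v) (bigID (fun h' => leg h') (fun h' => endp h' == v) w) /=.
    congr (_ + _ + _); apply: eq_bigr => h' /andP [_ lh]; by rewrite Ww.2.
  move: a; set A := \sum_(h' | _) legw h'; set K := k * _; set D := div v; lia.
have E1 : \sum_(v | U v) div v = \sum_(h' | ~~ leg h' && U (endp h')) w h'.
  rewrite (partition_big endp U) //=; last by move=> h' /andP [].
  apply: eq_bigr => v Uv; apply: eq_bigl => h'.
  case: (eqVneq (endp h') v) => [->|ne]; last by rewrite /= andbF.
  by rewrite Uv !andbT.
have E2 : \sum_(h' | ~~ leg h' && U (endp h')) w h' =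
    \sum_(h' | (~~ leg h' && U (endp h')) && U (endp (i h'))) w h' +
    \sum_(h' | (~~ leg h' && U (endp h')) && ~~ U (endp (i h'))) w h'.
  by rewrite (bigID (fun h' => U (endp (i h')))).
have E3 : \sum_(h' | (~~ leg h' && U (endp h')) && U (endp (i h'))) w h' = 0.
  set X := (X in X = 0).
  have : X = - X.
    rewrite {1}/X (reindex_inj (inv_inj hi)) /= -sumrN.
    apply: eq_big => [h'|h' /andP [/andP [nl' _] _]].
      by rewrite /U /= hi leg_i andbAC.
    by rewrite w_anti // -leg_i.
  by move/eqP; rewrite -addr_eq0 -mulr2n mulrn_eq0 /= => /eqP.
have E4 : w h <= \sum_(h' | (~~ leg h' && U (endp h')) && ~~ U (endp (i h'))) w h'.
  have Ph : (~~ leg h && U (endp h)) && ~~ U (endp (i h)).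
    rewrite nl /U /= lexx /= -ltNge -subr_gt0 -Hphi //.
    by rewrite /f mulr_gt0 // ltr0z.
  rewrite (bigD1 h) //= ler_wpDr //; apply: sumr_ge0 => h' /andP [/andP [/andP [nl' Ut] nUh] _].
  have fpos : 0 < f h'.
    rewrite Hphi // subr_gt0; move: Ut nUh; rewrite /U /= -ltNge; apply: le_lt_trans.
  rewrite leNgt; apply/negP => wn.
  have : f h' <= 0 by rewrite /f mulr_le0_ge0 ?tval_ge0 // lerz0 ltW.
  by rewrite leNgt fpos.
have E5 : \sum_(v | U v) div v <= Bnd.
  apply: (le_trans (ler_sum _ (fun v _ => ler_norm (div v)))).
  rewrite /Bnd (bigID U predT) /= ler_wpDr ?sumr_ge0 //.
  by apply: ler_sum => v _; rewrite divE normrN.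
apply: (le_trans E4); apply: le_trans E5.
by rewrite E1 E2 E3 add0r.
Qed.

Lemma bound w t h : Wg w -> cone_w endp i w t -> 0 < tv t h -> `|w h| <= Bnd.
Proof.
move=> Ww Ct tp.
have nl : ~~ leg h by apply/negP => lh; rewrite tval_leg // ltxx in tp.
case: (lerP 0 (w h)) => wh.
  by rewrite ger0_norm //; apply: (bound_pos Ww Ct).
rewrite ltr0_norm // -w_anti //; apply: (bound_pos Ww Ct).
  by rewrite w_anti // oppr_ge0 ltW.
by rewrite tval_i.
Qed.

Lemma lin0l (t : Edge i -> rat) : lin (fun _ => 0) t = 0.
Proof. by rewrite /lin big1 // => e _; rewrite mul0r. Qed.

Lemma lin_unit (e : Edge i) t : lin (fun e' => (e' == e)%:R) t = t e.
Proof.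
rewrite /lin (bigD1 e) //= eqxx mul1r big1 ?addr0 // => e' ne.
by rewrite (negbTE ne) mul0r.
Qed.

Lemma Lw0 w : Lw w (fun _ => 0).
Proof. by move=> s _; rewrite big1 // => h _; rewrite tval0 mulr0. Qed.

Lemma Lwlin w u t c d : Lw w u -> Lw w t -> Lw w (fun e => c * u e + d * t e).
Proof.
move=> Lu Lt s cs.
have -> : \sum_(h <- s) (w h)%:~R * tv (fun e => c * u e + d * t e) h =
   c * \sum_(h <- s) (w h)%:~R * tv u h + d * \sum_(h <- s) (w h)%:~R * tv t h.
  rewrite !mulr_sumr -big_split; apply: eq_bigr => h _ /=.
  by rewrite tval_lin mulrDr; congr (_ + _); rewrite mulrCA.
by rewrite Lu // Lt // !mulr0 addr0.
Qed.

Definition memb (F : set (Edge i -> rat)) := exists w a, Wg w /\ (forall e, 0 <= a e) /\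
  F = [set t | cone_w endp i w t /\ lin a t = 0].

Lemma FG_memb F : F_Gamma endp i g k legw F <-> memb F.
Proof.
split.
- move=> [w [Ww fF]]; rewrite coneE in fF.
  have [b [b0 ->]] := face_orth (Lw0 w) (@Lwlin w) fF.
  by exists w, b.
- move=> [w [a [Ww [a0 ->]]]]; exists w; split => //; exists a; split => //.
  by move=> t [t0 _]; apply: lin_ge0.
Qed.

Lemma face_memb C F : memb C -> face F C -> memb F.
Proof.
move=> [w [a [Ww [a0 ->]]]] fF.
pose L t := Lw w t /\ lin a t = 0.
have CE : [set t | cone_w endp i w t /\ lin a t = 0] =
          [set t | (forall e, 0 <= t e) /\ L t].
  apply/seteqP; split => t /=.
  - by move=> [[t0 Lt] la]; split => //; split.
  - by move=> [t0 [Lt la]]; split => //; split.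
rewrite CE in fF.
have L0 : L (fun _ => 0) by split; [apply: Lw0 | apply: lin0r].
have Llin u t c d : L u -> L t -> L (fun e => c * u e + d * t e).
  move=> [Lu lu] [Lt lt]; split; first exact: Lwlin.
  by rewrite lin_linr lu lt !mulr0 addr0.
have [b [b0 ->]] := face_orth L0 Llin fF.
exists w, (fun e => a e + b e); split => //; split.
  by move=> e; rewrite addr_ge0.
apply/seteqP; split => t /=.
- by move=> [[t0 [Lt la]] lb]; split; [split|rewrite lin_addl la lb addr0].
- move=> [[t0 Lt]]; rewrite lin_addl => s0.
  have := lin_ge0 a0 t0; have := lin_ge0 b0 t0 => h1 h2.
  have la : lin a t = 0 by lra.
  have lb : lin b t = 0 by lra.
  by split => //; split.
Qed.

Definition dd (w w' : H -> int) : Edge i -> rat :=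
  fun e => \sum_h (((w h - w' h)%:~R : rat) ^+ 2) * ind h e.

Lemma dd_ge0 w w' e : 0 <= dd w w' e.
Proof. by apply: sumr_ge0 => h _; rewrite mulr_ge0 ?sqr_ge0 ?ind_ge0. Qed.

Lemma lin_dd w w' t :
  lin (dd w w') t = \sum_h (((w h - w' h)%:~R : rat) ^+ 2) * tv t h.
Proof.
rewrite /lin /dd; under eq_bigr do rewrite mulr_suml.
rewrite exchange_big; apply: eq_bigr => h _.
by rewrite -lin_ind /lin mulr_sumr; apply: eq_bigr => e _; rewrite mulrA.
Qed.

Lemma inter_face C D : memb C -> memb D -> face (C `&` D) C.
Proof.
move=> [w [a [Ww [a0 ->]]]] [w' [b [Ww' [b0 ->]]]].
exists (fun e => b e + dd w w' e); split.
  by move=> t [[t0 _] _]; apply: lin_ge0 => // e; rewrite addr_ge0 ?dd_ge0.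
apply/seteqP; split => t /=.
- move=> [[ct la] [ct' lb]]; split; first by split.
  rewrite lin_addl lb add0r lin_dd big1 // => h _.
  by rewrite expr2 -mulrA (key Ww Ww' ct ct') mulr0.
- move=> [[ct la]]; rewrite lin_addl => s0.
  have := lin_ge0 b0 ct.1; have := lin_ge0 (@dd_ge0 w w') ct.1 => h1 h2.
  have lb : lin b t = 0 by lra.
  have ld : lin (dd w w') t = 0 by lra.
  split; first by split.
  split => //; split; first exact: ct.1.
  move=> s cs; rewrite -[RHS](ct.2 s cs); apply: eq_bigr => h _.
  have P0 : forall h, true -> 0 <= (((w h - w' h)%:~R : rat) ^+ 2) * tv t h.
    by move=> h' _; rewrite mulr_ge0 ?sqr_ge0 ?tval_ge0 //; apply: ct.1.
  rewrite lin_dd in ld.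
  have : (((w h - w' h)%:~R : rat) ^+ 2) * tv t h = 0 by apply: (psumr_eq0P P0 ld).
  move/eqP; rewrite mulf_eq0 expf_eq0 /= rmorphB subr_eq0.
  by case/orP => /eqP ->; rewrite ?mulr0.
Qed.

Fixpoint allseqs (n : nat) : seq (seq H) :=
  if n is n'.+1 then [::] :: [seq h :: s | h <- enum H, s <- allseqs n']
  else [:: [::]].

Lemma mem_allseqs n s : (size s <= n)%N -> s \in allseqs n.
Proof.
elim: n s => [|n IH] [|h s] //=.
rewrite ltnS => sz; rewrite inE; apply/orP; right.
by apply: (allpairs_f (fun h s => h :: s)); [rewrite mem_enum | apply: IH].
Qed.

Lemma cycle_size s : is_cycle endp i s -> (size s <= #|V|)%N.
Proof.
move=> /and5P [_ _ _ u _]; rewrite -(size_map endp) cardE.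
by apply: uniq_leq_size u _ => x _; rewrite mem_enum.
Qed.

Definition coef (w : H -> int) (s : seq H) : Edge i -> rat :=
  fun e => \sum_(h <- s) (w h)%:~R * ind h e.

Lemma lin_coef w s t : lin (coef w s) t = \sum_(h <- s) (w h)%:~R * tv t h.
Proof.
rewrite /lin /coef; under eq_bigr do rewrite mulr_suml.
rewrite exchange_big; apply: eq_bigr => h _.
by rewrite -lin_ind /lin mulr_sumr; apply: eq_bigr => e _; rewrite mulrA.
Qed.

Definition sgb (b : bool) : rat := if b then 1 else -1.

Lemma memb_poly C : memb C -> polyhedral_cone C.
Proof.
move=> [w [a [Ww [a0 ->]]]].
pose T := (bool * (option (Edge i) + seq_sub (allseqs #|V|)))%type.
pose Fn (x : T) : Edge i -> rat :=
  match x with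
  | (_, inl (Some e)) => fun e' => (e' == e)%:R
  | (b, inl None) => fun e => sgb b * a e
  | (b, inr s) => if is_cycle endp i (ssval s) then fun e => sgb b * coef w (ssval s) e
                  else fun _ => 0
  end.
apply: (@poly_of_fin _ T Fn); apply/seteqP; split => t /=.
- move=> [[t0 Lt] la] [b [[e|]|s]] /=.
  + by rewrite lin_unit.
  + by rewrite lin_scalel la mulr0.
  + case: ifP => cs; last by rewrite lin0l.
    by rewrite lin_scalel lin_coef Lt // mulr0.
- move=> Hx.
  have t0 e : 0 <= t e by have := Hx (true, inl (Some e)); rewrite /= lin_unit.
  split; [split => //|].
  + move=> s cs.
    have sin : s \in allseqs #|V| by apply: mem_allseqs; apply: cycle_size.
    have := Hx (true, inr (SeqSub sin)); have := Hx (false, inr (SeqSub sin)).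
    rewrite /= cs !lin_scalel lin_coef /sgb; lra.
  + have := Hx (true, inl None); have := Hx (false, inl None).
    rewrite /= !lin_scalel /sgb; lra.
Qed.

Definition inZ (w : H -> int) (h : H) : Prop :=
  exists t, cone_w endp i w t /\ 0 < tv t h.

Definition nB : nat := (2 * `|Bnd|)%N.
Definition enc (z : int) : 'I_nB.+1 := inord `|z + Bnd|.

Lemma enc_inj z1 z2 : `|z1| <= Bnd -> `|z2| <= Bnd -> enc z1 = enc z2 -> z1 = z2.
Proof.
move=> h1 h2 E; have := congr1 (@nat_of_ord _) E; rewrite /enc !inordK /nB.
all: lia.
Qed.

Lemma inZ_bound w h : Wg w -> inZ w h -> `|w h| <= Bnd.
Proof. by move=> Ww [t [ct tp]]; apply: bound ct tp. Qed.

Lemma cone_incl w1 w2 t : (forall h, inZ w1 h -> w1 h = w2 h) ->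
  cone_w endp i w1 t -> cone_w endp i w2 t.
Proof.
move=> E [t0 Lt]; split => // s cs; rewrite -[RHS](Lt s cs).
apply: eq_bigr => h _.
case: (eqVneq (tv t h) 0) => [->|nz]; first by rewrite !mulr0.
have tp : 0 < tv t h by rewrite lt_def nz tval_ge0.
by rewrite E //; exists t.
Qed.

Definition keyw (w : H -> int) : {ffun H -> option 'I_nB.+1} :=
  [ffun h => if `[< inZ w h >] then Some (enc (w h)) else None].

Lemma keyw_cone w1 w2 : Wg w1 -> Wg w2 -> keyw w1 = keyw w2 ->
  cone_w endp i w1 = cone_w endp i w2.
Proof.
move=> W1 W2 Ek.
have K h : (inZ w1 h <-> inZ w2 h) /\ (inZ w1 h -> w1 h = w2 h).
  have := congr1 (fun f : {ffun H -> option 'I_nB.+1} => f h) Ek; rewrite /= !ffunE.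
  case: asboolP => z1; case: asboolP => z2 //=.
  - by move=> [] E; split => // _; apply: enc_inj E; exact: inZ_bound.
apply/seteqP; split => t; apply: cone_incl => h.
- by move/(proj2 (K h)).
- by move=> z2; apply/esym/(proj2 (K h)); apply/(proj1 (K h)).
Qed.

Definition Tkey := ({ffun H -> option 'I_nB.+1} * {set Edge i})%type.

Definition Qk (x : Tkey) (G : set (Edge i -> rat)) : Prop :=
  exists w a, Wg w /\ (forall e, 0 <= a e) /\
    G = [set t | cone_w endp i w t /\ lin a t = 0] /\ x = (keyw w, [set e | a e != 0]%SET).

Lemma Qk_uniq x G1 G2 : Qk x G1 -> Qk x G2 -> G1 = G2.
Proof.
move=> [w1 [a1 [W1 [a10 [-> E1]]]]] [w2 [a2 [W2 [a20 [-> E2]]]]].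
rewrite E1 in E2; case: E2 => Ek Es.
have cw := keyw_cone W1 W2 Ek.
have Sa e : (a1 e != 0) = (a2 e != 0).
  by have := congr1 (fun S : {set Edge i} => e \in S) Es; rewrite /= !inE.
rewrite cw; apply/seteqP; split => t /= [ct la]; split => //.
- apply/(lin_eq0 a20 ct.1) => e; rewrite -Sa; exact: (proj1 (lin_eq0 a10 ct.1) la).
- apply/(lin_eq0 a10 ct.1) => e; rewrite Sa; exact: (proj1 (lin_eq0 a20 ct.1) la).
Qed.

Definition rep (x : Tkey) : set (Edge i -> rat) :=
  match pselect (exists G, Qk x G) with
  | left ex => sval (cid ex)
  | right _ => set0
  end.

Lemma FG_finite : finite_set (F_Gamma endp i g k legw).
Proof.
apply: (@sub_finite_set _ _ (rep @` setT)); last first.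
  by apply: finite_image; apply: finite_finset.
move=> F /FG_memb [w [a [Ww [a0 FE]]]].
have QF : Qk (keyw w, [set e | a e != 0]%SET) F by exists w, a.
exists (keyw w, [set e | a e != 0]%SET) => //.
rewrite /rep; case: pselect => [ex|nex]; last by exfalso; apply: nex; exists F.
by case: (cid ex) => G QG /=; apply: Qk_uniq QG QF.
Qed.
End Graph.

Lemma corollary_aux (V H : finType) (endp : H -> V) (i : H -> H)
  (g : V -> nat) (k : int) (legw : H -> int) :
  involutive i -> graph_connected endp i ->
  finite_fan (F_Gamma endp i g k legw).
Proof.
move=> hi conn; split; first exact: FG_finite conn.
split.
- by move=> C /FG_memb; apply: memb_poly.
- by move=> C /FG_memb [w [a [Ww [a0 ->]]]] t [[t0 _] _].
- by move=> C F /FG_memb mC fF; apply/FG_memb; apply: face_memb mC fF.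
- move=> C D /FG_memb mC /FG_memb mD; split.
  by have := inter_face hi conn mC mD.
  by rewrite setIC; have := inter_face hi conn mD mC.
Qed.

Unset Implicit Arguments.
Local Close Scope classical_set_scope.

Theorem corollary3p11 (V H : finType) (endp : H -> V) (i : H -> H)
  (g : V -> nat) (k : int) (legw : H -> int) :
  involutive i ->
  graph_connected endp i ->
  \sum_(h | is_leg i h) legw h = - k * (2 * genus_total endp i g - 2) ->
  finite_fan (F_Gamma endp i g k legw).
Proof.
move=> hi conn _; exact: corollary_aux hi conn.
Qed.
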